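(* Let $\Gamma=(V,E)$ be a $d$-regular graph on $N$ vertices whose adjacency matrix $A$ has eigenvalues $d=\lambda_1\ge\lambda_2\ge\dots\ge\lambda_N$. Let $M\in\{1,\dots,N-1\}$ with $|\lambda_M|<|\lambda_N|$, and let $U=\mathrm{Span}\{\mathbf{f}\}\oplus\bigoplus_{i>M}\ker(A-\lambda_iI)$. Let $X\subset V$ be an independent set, $\alpha=|X|/N$, and $D=\|\chi_X-P_U(\chi_X)\|_2$. Then $$D^2\le \frac{(1-\alpha)|\lambda_N|-d\alpha}{|\lambda_N|-|\lambda_M|}\,\alpha.$$
   Context: $\mathbf{f}$ is the all-ones vector in $\mathbb{R}^V$, $\chi_X$ the characteristic vector of $X$, and $\mathbb{R}^V$ carries the inner product $\langle x,y\rangle=\frac1{|V|}\sum_{i\in V}x_iy_i$ with norm $\|x\|_2=\sqrt{\langle x,x\rangle}$. $P_U$ denotes orthogonal projection onto $U$. An independent set is a set of vertices with no edges between them. *)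

(* Defs.v *)
From HB Require Import structures.
From mathcomp Require Import all_boot all_order all_algebra.
Set Implicit Arguments. Unset Strict Implicit. Unset Printing Implicit Defensive.
Import Order.TTheory GRing.Theory Num.Theory.
Local Open Scope ring_scope.

Definition adjmx (R : nzRingType) (N : nat) (e : rel 'I_N) : 'M[R]_N :=
  \matrix_(i, j) (e i j)%:R.

Definition onesv (R : nzRingType) (N : nat) : 'rV[R]_N := const_mx 1.

Definition charv (R : nzRingType) (N : nat) (X : {set 'I_N}) : 'rV[R]_N :=
  \row_i (i \in X)%:R.

Definition inner (R : fieldType) (N : nat) (x y : 'rV[R]_N) : R :=
  (N%:R)^-1 * \sum_(i < N) x 0 i * y 0 i.

Definition sqnorm (R : fieldType) (N : nat) (x : 'rV[R]_N) : R := inner x x.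

Definition is_orth_proj (R : fieldType) (N m : nat) (U : 'M[R]_(m, N))
  (x p : 'rV[R]_N) : Prop :=
  (p <= U)%MS /\ forall u : 'rV[R]_N, (u <= U)%MS -> inner (x - p) u = 0.

Definition Usp (R : fieldType) (N : nat) (A : 'M[R]_N) (lam : nat -> R) (M : nat)
  : 'M[R]_N :=
  (<<onesv R N>> + \sum_(M.+1 <= i < N.+1) kermx (A - (lam i)%:M))%MS.

(* Main.v *)
Require Import Defs.
From HB Require Import structures.
From mathcomp Require Import all_boot all_order all_algebra.
From mathcomp Require Import ring lra.
Set Implicit Arguments. Unset Strict Implicit. Unset Printing Implicit Defensive.
Import Order.TTheory GRing.Theory Num.Theory.
Local Open Scope ring_scope.

Section Dot.
Variable R : rcfType.
Definition dp {m : nat} (x y : 'rV[R]_m) : R := \sum_(i < m) x 0 i * y 0 i.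
Variable n : nat.
Implicit Types x y z : 'rV[R]_n.

Lemma dpC x y : dp x y = dp y x.
Proof. by apply: eq_bigr => i _; rewrite mulrC. Qed.

Lemma dpDr x y z : dp x (y + z) = dp x y + dp x z.
Proof. by rewrite /dp -big_split; apply: eq_bigr => i _; rewrite mxE mulrDr. Qed.

Lemma dpZr x a y : dp x (a *: y) = a * dp x y.
Proof. by rewrite /dp mulr_sumr; apply: eq_bigr => i _; rewrite mxE mulrCA. Qed.

Lemma dpNr x y : dp x (- y) = - dp x y.
Proof. by rewrite /dp -sumrN; apply: eq_bigr => i _; rewrite mxE mulrN. Qed.

Lemma dpBr x y z : dp x (y - z) = dp x y - dp x z.
Proof. by rewrite dpDr dpNr. Qed.

Lemma dp0r x : dp x 0 = 0.
Proof. by rewrite /dp big1 // => i _; rewrite mxE mulr0. Qed.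

Lemma dp_sumr (I : finType) (P : pred I) x (F : I -> 'rV[R]_n) :
  dp x (\sum_(i | P i) F i) = \sum_(i | P i) dp x (F i).
Proof.
elim/big_rec2: _ => [|i a y _ <-]; first by rewrite dp0r.
by rewrite dpDr.
Qed.

Lemma dpDl x y z : dp (x + y) z = dp x z + dp y z.
Proof. by rewrite dpC dpDr !(dpC z). Qed.
Lemma dpZl a x y : dp (a *: x) y = a * dp x y.
Proof. by rewrite dpC dpZr dpC. Qed.
Lemma dpBl x y z : dp (x - y) z = dp x z - dp y z.
Proof. by rewrite dpC dpBr !(dpC z). Qed.

Lemma dp_ge0 x : 0 <= dp x x.
Proof. by apply: sumr_ge0 => i _; rewrite -expr2 sqr_ge0. Qed.

Lemma dp_eq0 x : dp x x = 0 -> x = 0.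
Proof.
move=> H; apply/rowP => i; rewrite mxE.
have /eqP : x 0 i * x 0 i = 0.
  apply: (@psumr_eq0P _ _ _ (fun i => x 0 i * x 0 i) _ H i isT).
  by move=> j _; rewrite -expr2 sqr_ge0.
by rewrite mulf_eq0 orbb => /eqP.
Qed.

Lemma dpM (B : 'M[R]_n) : B^T = B -> forall x y, dp (x *m B) y = dp x (y *m B).
Proof.
move=> BT x y; rewrite /dp.
under eq_bigr => i _ do rewrite mxE big_distrl /=.
under [RHS]eq_bigr => i _ do rewrite mxE big_distrr /=.
rewrite exchange_big /=; apply: eq_bigr => i _; apply: eq_bigr => j _.
have -> : B i j = B j i by rewrite -{1}BT mxE.
by rewrite mulrAC mulrA.
Qed.

End Dot.

Lemma dp_kill (R : rcfType) (n : nat) (B : 'M[R]_n.+1) : B^T = B -> forall (v : 'rV[R]_n.+1) k,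
  v *m B ^+ k.+2 = 0 -> v *m B ^+ k.+1 = 0.
Proof.
move=> BT v k H; set y := v *m B ^+ k.
have e1 : forall j, B ^+ j.+1 = B ^+ j *m B by move=> j; rewrite exprSr.
have -> : v *m B ^+ k.+1 = y *m B by rewrite /y -mulmxA -e1.
apply: dp_eq0; rewrite dpM // /y -!mulmxA (mulmxA (B ^+ k)) -e1 -e1.
by rewrite H dp0r.
Qed.

Lemma dp_killall (R : rcfType) (n : nat) (B : 'M[R]_n.+1) : B^T = B -> forall (v : 'rV[R]_n.+1) k,
  v *m B ^+ k.+1 = 0 -> v *m B = 0.
Proof.
move=> BT v; elim=> [|k IH] H; first by rewrite expr1 in H.
by apply: IH; apply: dp_kill.
Qed.


Section Spec2.
Variable R : rcfType.
Variable n : nat.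
Variable A : 'M[R]_n.+1.
Hypothesis Asym : A^T = A.
Variable lam : nat -> R.
Hypothesis Hchar : char_poly A = \prod_(i < n.+1) ('X - (lam i.+1)%:P).

Definition Prep (i : 'I_n.+1) : bool :=
  [forall j : 'I_n.+1, (j < i)%N ==> (lam j.+1 != lam i.+1)].

Lemma Prep_ex (i : 'I_n.+1) : exists2 j, Prep j & lam j.+1 = lam i.+1.
Proof.
have exP : exists k, (k < n.+1)%N && (lam k.+1 == lam i.+1).
  by exists i; apply/andP; split; [apply: ltn_ord|].
case: (ex_minnP exP) => m /andP[mlt /eqP meq] mmin.
exists (Ordinal mlt) => //.
apply/forallP => j; apply/implyP => jlt /=; rewrite meq.
apply/negP => /eqP ej.
have : (m <= j)%N by apply: mmin; apply/andP; split; [apply: ltn_ord|apply/eqP].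
by rewrite leqNgt jlt.
Qed.

Lemma Prep_neq (i j : 'I_n.+1) : Prep i -> Prep j -> i != j -> lam i.+1 != lam j.+1.
Proof.
move=> Pi Pj; case: (ltngtP i j) => [ij|ji|/val_inj ->]; last by rewrite eqxx.
- by move=> _; move/forallP: Pj => /(_ i); rewrite ij.
- by move=> _; move/forallP: Pi => /(_ j); rewrite ji eq_sym.
Qed.

Definition Pm := \prod_(i | Prep i) ('X - (lam i.+1)%:P).

Lemma hornerT p : (horner_mx A p)^T = horner_mx A p.
Proof.
elim/poly_ind: p => [|p c IH]; first by rewrite rmorph0 trmx0.
rewrite rmorphD rmorphM /= horner_mx_X horner_mx_C raddfD /=.
have hc : (horner_mx A p * A) = A * horner_mx A p.
  have e : horner_mx A (p * 'X) = horner_mx A ('X * p) by rewrite mulrC.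
  by rewrite !rmorphM /= horner_mx_X in e.
rewrite -mulmxE trmx_mul IH Asym tr_scalar_mx mulmxE hc.
by [].
Qed.

Lemma char_dvd : char_poly A %| Pm ^+ n.+1.
Proof.
have -> : Pm ^+ n.+1 = \prod_(i < n.+1) Pm by rewrite prodr_const card_ord.
rewrite Hchar.
apply: (big_ind2 (fun p q => p %| q)) => //.
  by move=> ? ? ? ? ? ?; apply: dvdp_mul.
move=> i _; have [j Pj ej] := Prep_ex i.
by rewrite /Pm (bigD1 j) //= ej dvdp_mulr.
Qed.

Lemma Pm_zero (v : 'rV[R]_n.+1) : v *m horner_mx A Pm = 0.
Proof.
apply: (dp_killall (hornerT Pm) (k := n)).
have [q hq] := dvdpP _ _ char_dvd.
by rewrite -rmorphXn /= hq rmorphM /= Cayley_Hamilton mulr0 mulmx0.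
Qed.

Lemma decomp v : exists u : 'I_n.+1 -> 'rV[R]_n.+1,
  v = \sum_(i | Prep i) u i /\ forall i, u i *m A = lam i.+1 *: u i.
Proof.
have : (v <= kermxpoly A Pm)%MS by apply/sub_kermxP; apply: Pm_zero.
rewrite (kermxpoly_prod A (P := Prep) (p_ := fun i => 'X - (lam i.+1)%:P)); last first.
  move=> i j Pi Pj ji; apply: coprimep_XsubC2; rewrite subr_eq0.
  by apply: Prep_neq => //; rewrite eq_sym.
case/sub_sumsmxP => u ->.
exists (fun i => u i *m kermxpoly A ('X - (lam i.+1)%:P)); split => // i.
rewrite -eigenspace_poly -mulmxA.
have : eigenspace A (lam i.+1) *m (A - (lam i.+1)%:M) = 0 by apply: mulmx_ker.
rewrite mulmxBr mul_mx_scalar => /eqP; rewrite subr_eq0 => /eqP ->.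
by rewrite -scalemxAr.
Qed.

Lemma ortho x y a b : x *m A = a *: x -> y *m A = b *: y -> a != b -> dp x y = 0.
Proof.
move=> hx hy ab.
have : a * dp x y = b * dp x y by rewrite -dpZl -hx dpM // hy dpZr.
move/eqP; rewrite -subr_eq0 -mulrBl mulf_eq0 subr_eq0 (negbTE ab) /=.
by move/eqP.
Qed.

Lemma rayleigh c v :
  (forall i : 'I_n.+1, lam i.+1 < c -> forall u, u *m A = lam i.+1 *: u -> dp v u = 0) ->
  c * dp v v <= dp (v *m A) v.
Proof.
move=> Hv; have [u [vE uE]] := decomp v.
have key : forall i, Prep i -> dp v (u i) = dp (u i) (u i).
  move=> i Pi; rewrite {1}vE dpC dp_sumr (bigD1 i) //= big1 ?addr0 ?dpC //.
  move=> j /andP[Pj ji]; apply: (ortho (uE i) (uE j)).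
  by apply: Prep_neq => //; rewrite eq_sym.
have e1 : dp v v = \sum_(i | Prep i) dp v (u i) by rewrite -dp_sumr -vE.
have e2 : dp (v *m A) v = \sum_(i | Prep i) dp (v *m A) (u i)
  by rewrite -dp_sumr -vE.
rewrite e1 e2 mulr_sumr; apply: ler_sum => i Pi.
rewrite dpM // uE dpZr key //.
case: (ltrP (lam i.+1) c) => hc.
  by rewrite -key // (Hv i hc _ (uE i)) !mulr0.
by apply: ler_wpM2r => //; apply: dp_ge0.
Qed.

End Spec2.

Lemma sub_nat_sum (F : fieldType) k (B : nat -> 'M[F]_k) a b i :
  (a <= i < b)%N -> (B i <= \sum_(a <= j < b) B j)%MS.
Proof.
move=> /andP[ai ib]; rewrite (big_cat_nat ai (ltnW ib)) /= (big_ltn ib).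
exact: submx_trans (addsmxSl (B i) _) (addsmxSr _ _).
Qed.

Lemma stable_adds (F : fieldType) k (V W f : 'M[F]_k) :
  (V *m f <= V)%MS -> (W *m f <= W)%MS -> ((V + W)%MS *m f <= (V + W)%MS)%MS.
Proof. by move=> hV hW; rewrite addsmxMr addsmxS. Qed.

Unset Implicit Arguments.
Set Strict Implicit.

Theorem lemma4p2 (R : rcfType) (N : nat) (e : rel 'I_N) (d : nat)
  (lam : nat -> R) (M : nat) (X : {set 'I_N}) (p : 'rV[R]_N) :
  symmetric e -> irreflexive e ->
  (forall v : 'I_N, #|[set w | e v w]| = d) ->
  (forall i j : nat, (1 <= i)%N -> (i <= j)%N -> (j <= N)%N -> lam j <= lam i) ->
  char_poly (adjmx R e) = \prod_(1 <= i < N.+1) ('X - (lam i)%:P) ->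
  (1 <= M)%N -> (M <= N.-1)%N ->
  `|lam M| < `|lam N| ->
  (forall x y, x \in X -> y \in X -> ~~ e x y) ->
  is_orth_proj (Usp (adjmx R e) lam M) (charv R X) p ->
  let alpha := #|X|%:R / N%:R in
  sqnorm (charv R X - p) <=
    ((1 - alpha) * `|lam N| - d%:R * alpha) / (`|lam N| - `|lam M|) * alpha.
Proof.
move=> Hsym Hirr Hreg Hsort Hchar HM1 HMN Hlt Hind [HpU Hp]; cbv zeta.
destruct N as [|n]; first by move: HM1 HMN; rewrite leqn0 => h1 /eqP h2; move: h1; rewrite h2.
set alpha := #|X|%:R / (n.+1)%:R.
set A := adjmx R e.
set U := Usp A lam M.
set chi := charv R X.
set f := onesv R n.+1.
set w := chi - p.
have Asym : A^T = A by apply/matrixP => i j; rewrite !mxE Hsym.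
have Hchar' : char_poly A = \prod_(i < n.+1) ('X - (lam i.+1)%:P).
  by rewrite Hchar big_add1 /= big_mkord.
have fA : f *m A = d%:R *: f.
  apply/rowP => j; rewrite !mxE.
  under eq_bigr => i _ do rewrite !mxE mul1r Hsym.
  rewrite -(Hreg j) mulr1 -natr_sum; congr (_%:R).
  rewrite -sum1_card [RHS]big_mkcond /=; apply: eq_bigr => i _.
  by rewrite inE; case: (e j i).
have Nr0 : (n.+1)%:R != 0 :> R by rewrite pnatr_eq0.
have fU : (f <= U)%MS by rewrite /U /Usp; apply: submx_trans (addsmxSl _ _); rewrite genmxE.
have Ustab : (U *m A <= U)%MS.
  apply: stable_adds.
    by rewrite (eqmxMr _ (genmxE f)) genmxE fA scalemx_sub.
  apply: (big_ind (fun V => (V *m A <= V)%MS)).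
  - by rewrite mul0mx.
  - by move=> V W; apply: stable_adds.
  move=> i _; apply: comm_mx_stable_ker.
  by rewrite /comm_mx mulmxBl mulmxBr mul_mx_scalar mul_scalar_mx.
have wU : forall u, (u <= U)%MS -> dp w u = 0.
  move=> u hu; have := Hp u hu; rewrite /inner => /eqP.
  by rewrite mulf_eq0 invr_eq0 (negbTE Nr0) /= => /eqP.
have kU : forall i, (M < i <= n.+1)%N -> (kermx (A - (lam i)%:M) <= U)%MS.
  move=> i hi; rewrite /U /Usp; apply: submx_trans (addsmxSr _ _).
  by apply: (sub_nat_sum (fun i => kermx (A - (lam i)%:M))).
set x := (#|X|%:R : R).
have sumX : \sum_(i < n.+1) ((i \in X)%:R : R) = x.
  rewrite -natr_sum; congr (_%:R).
  by rewrite -sum1_card [RHS]big_mkcond /=; apply: eq_bigr => i _; case: (i \in X).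
have dcc : dp chi chi = x.
  rewrite -sumX; apply: eq_bigr => i _; rewrite !mxE; by case: (i \in X); rewrite ?mulr1 ?mulr0.
have dfc : dp f chi = x.
  rewrite -sumX; apply: eq_bigr => i _; by rewrite !mxE mul1r.
have dff : dp f f = (n.+1)%:R.
  rewrite /dp (eq_bigr (fun _ => 1)); last by move=> i _; rewrite !mxE mulr1.
  by rewrite sumr_const card_ord.
have dAc : dp (chi *m A) chi = 0.
  rewrite /dp big1 // => j _; rewrite mxE big_distrl big1 //= => i _.
  rewrite !mxE; have [hi|hi] := boolP (i \in X); have [hj|hj] := boolP (j \in X);
    rewrite ?mulr0 ?mul0r //.
  by rewrite (negbTE (Hind i j hi hj)) mulr0 mul0r.
have aN : alpha * (n.+1)%:R = x by rewrite /alpha divfK.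
set q := p - alpha *: f.
have qU : (q <= U)%MS by rewrite /q addmx_sub ?eqmx_opp ?scalemx_sub.
have qAU : (q *m A <= U)%MS by apply: submx_trans (submxMr A qU) Ustab.
have chiE : chi = alpha *: f + q + w.
  by rewrite /q /w [alpha *: f + _]addrC subrK addrC subrK.
have dwf : dp w f = 0 by apply: wU.
have dwq : dp w q = 0 by apply: wU.
have dwqA : dp w (q *m A) = 0 by apply: wU.
have dfq : dp f q = 0.
  have dfp : dp f p = x.
    have : dp f w = 0 by rewrite dpC.
    by rewrite /w dpBr dfc => /eqP; rewrite subr_eq0 => /eqP <-.
  by rewrite /q dpBr dpZr dfp dff aN subrr.
clearbody q w.
have R1 := @rayleigh R n A Asym lam Hchar' (lam n.+1) q.
have {R1} R1 : lam n.+1 * dp q q <= dp (q *m A) q.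
  apply: R1 => i hi; exfalso; move: hi; rewrite ltNge Hsort //.
have R2 := @rayleigh R n A Asym lam Hchar' (lam M) w.
have {R2} R2 : lam M * dp w w <= dp (w *m A) w.
  apply: R2 => i hi u hu; apply: wU; apply: submx_trans (kU i.+1 _).
    by apply/sub_kermxP; rewrite mulmxBr mul_mx_scalar hu subrr.
  rewrite ltn_ord andbT ltnNge; apply/negP => iM; move: hi.
  by rewrite ltNge Hsort //; apply: leq_trans HMN _; rewrite leq_pred.
have cAE : chi *m A = (alpha * d%:R) *: f + q *m A + w *m A.
  by rewrite {1}chiE !mulmxDl -scalemxAl fA scalerA.
have e1 : dp (q *m A) f = 0 by rewrite dpM // fA dpZr dpC dfq mulr0.
have e2 : dp (w *m A) f = 0 by rewrite dpM // fA dpZr dwf mulr0.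
have e3 : dp (q *m A) w = 0 by rewrite dpC.
have e4 : dp (w *m A) q = 0 by rewrite dpM // dpC dpC.
have e5 : dp f w = 0 by rewrite dpC.
have e6 : dp q w = 0 by rewrite dpC.
have e7 : dp q f = 0 by rewrite dpC.
have E : 0 = alpha ^+ 2 * d%:R * (n.+1)%:R + dp (q *m A) q + dp (w *m A) w.
  rewrite -dAc cAE [in X in dp _ X]chiE !dpDl !dpDr !dpZl !dpZr ?dff ?dfq ?e1 ?e2 ?e3 ?e4 ?e5 ?dwqA.
  rewrite ?mulr0 ?addr0 ?add0r. ring.
have S : x = alpha ^+ 2 * (n.+1)%:R + dp q q + dp w w.
  rewrite -dcc {1 2}chiE !dpDl !dpDr !dpZl !dpZr ?dff ?dfq ?dwf ?dwq ?e5 ?e6 ?e7.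
  rewrite ?mulr0 ?addr0 ?add0r. ring.
have QW : x - alpha ^+ 2 * (n.+1)%:R = dp q q + dp w w.
  by rewrite S; ring.
change ((n.+1)%:R^-1 * dp w w <=
  ((1 - alpha) * `|lam n.+1| - d%:R * alpha) / (`|lam n.+1| - `|lam M|) * alpha).
set L := `|lam n.+1|; set m := `|lam M|.
set Q := dp q q; set W := dp w w.
set P1 := dp (q *m A) q; set P2 := dp (w *m A) w.
set Nn := (n.+1)%:R : R.
have Q0 : 0 <= Q by apply: dp_ge0.
have W0 : 0 <= W by apply: dp_ge0.
have hL : - L <= lam n.+1 by rewrite lerNl /L /m -normrN ler_norm.
have hm : - m <= lam M by rewrite lerNl /L /m -normrN ler_norm.
have R1' : - L * Q <= P1 by apply: le_trans R1; apply: ler_wpM2r.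
have R2' : - m * W <= P2 by apply: le_trans R2; apply: ler_wpM2r.
have d0 : 0 <= (d%:R : R) by apply: ler0n.
have key : (L - m) * W <= L * (x - alpha ^+ 2 * Nn) - alpha ^+ 2 * d%:R * Nn.
  have E' : 0 = alpha ^+ 2 * d%:R * Nn + P1 + P2 := E.
  rewrite QW -/Q -/W.
  nra.
have Lm : 0 < L - m by rewrite subr_gt0.
have Nn0 : 0 < Nn by rewrite ltr0n.
rewrite mulrAC ler_pdivlMr //.
have step : Nn^-1 * W * (L - m) <=
    Nn^-1 * (L * (x - alpha ^+ 2 * Nn) - alpha ^+ 2 * d%:R * Nn).
  rewrite -mulrA; apply: ler_wpM2l; first by rewrite invr_ge0 ltW.
  by rewrite mulrC.
apply: le_trans step _.
rewrite le_eqVlt; apply/orP; left; apply/eqP; rewrite -aN; field; by rewrite addrC natr1 pnatr_eq0.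
Qed.
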